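(* Let $\mathcal{S}_1,\mathcal{S}_2\in\mathfrak{P}(X)$ with $\mathcal{S}_1\preceq\mathcal{S}_2$. Then for all $(S_1,H_1)\in\mathcal{S}_1$ and $(S_2,H_2)\in\mathcal{S}_2$, if $(S_2,H_2)<(S_1,H_1)$ then $(S_2,H_2)\in\mathcal{S}_1$, $H_2=\emptyset$ and $H_1=S_2$.
   Context: Let $X$ be a finite non-empty set. A set pair system on $X$ is a set of ordered pairs $(S,H)$ of subsets of $X$ with $S\ne\emptyset$ and $S\cap H=\emptyset$. On set pairs, $(S_1,H_1)\le(S_2,H_2)$ iff they are equal or one of: $S_1\cup H_1\subseteq S_2$; $S_1\cup H_1\subseteq H_2$; $S_1\subsetneq S_2$ and $H_1=H_2\ne\emptyset$; and $<$ means $\le$ and distinct. For set pair systems, $\mathcal{S}_1\preceq\mathcal{S}_2$ iff (SP1) for every $(S_1,H_1)\in\mathcal{S}_1$ there is $(S_2,H_2)\in\mathcal{S}_2$ with $(S_1,H_1)\le(S_2,H_2)$, and (SP2) for every $(S_2,H_2)\in\mathcal{S}_2$ with $H_2\ne\emptyset$, if some $(S_1,H_1)\in\mathcal{S}_1$ has $H_1=H_2$ then some such $(S_1,H_1)$ satisfies $(S_1,H_1)\le(S_2,H_2)$. A polestar system is a set pair system $\mathcal{S}$ with (PL1) $\mathcal{P}(\mathcal{S})=\{S:(S,H)\in\mathcal{S}\}$ is a partition of $X$; (PL2) distinct $(S,H),(S',H')\in\mathcal{S}$ have $S\ne S'$; (PL3) for each $(S,H)\in\mathcal{S}$ with $H\ne\emptyset$,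 $(H,\emptyset)\in\mathcal{S}$ and there is exactly one $(S',H')\in\mathcal{S}$ with $(S',H')\ne(S,H)$ and $H'=H$. $\mathfrak{P}(X)$ denotes the set of polestar systems on $X$. *)

(* Defs.v *)
From mathcomp Require Import all_boot.
Set Implicit Arguments. Unset Strict Implicit. Unset Printing Implicit Defensive.

Section SetPairs.
Variable X : finType.

Definition spair := ({set X} * {set X})%type.

Definition is_sps (S : {set spair}) : Prop :=
  forall p, p \in S -> p.1 != set0 /\ [disjoint p.1 & p.2].

Definition sp_le (p q : spair) : Prop :=
  p = q \/
  (p.1 :|: p.2) \subset q.1 \/
  (p.1 :|: p.2) \subset q.2 \/
  (p.1 \proper q.1 /\ p.2 = q.2 /\ q.2 != set0).

Definition sp_lt (p q : spair) : Prop := sp_le p q /\ p <> q.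

Definition sps_le (S1 S2 : {set spair}) : Prop :=
  (forall p1, p1 \in S1 -> exists2 p2, p2 \in S2 & sp_le p1 p2) /\
  (forall p2, p2 \in S2 -> p2.2 != set0 ->
     (exists2 p1, p1 \in S1 & p1.2 = p2.2) ->
     exists2 p1, p1 \in S1 & p1.2 = p2.2 /\ sp_le p1 p2).

Definition firsts (S : {set spair}) : {set {set X}} := [set p.1 | p in S].

Definition is_polestar (S : {set spair}) : Prop :=
  is_sps S /\
  partition (firsts S) [set: X] /\
  (forall p q, p \in S -> q \in S -> p <> q -> p.1 <> q.1) /\
  (forall p, p \in S -> p.2 != set0 ->
     (p.2, set0) \in S /\
     exists! q, q \in S /\ q <> p /\ q.2 = p.2).

End SetPairs.

(* Main.v *)
Require Import Defs.
From mathcomp Require Import all_boot.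

Section H.
Variable X : finType.
Implicit Types S : {set spair X}.

Lemma blk S p q x : is_polestar S -> p \in S -> q \in S ->
  x \in p.1 -> x \in q.1 -> p = q.
Proof.
move=> [_ [Hpart [Hpl2 _]]] pS qS xp xq.
case: (eqVneq p q) => // /eqP npq; exfalso.
have n1 := Hpl2 _ _ pS qS npq.
move: Hpart => /and3P [_ Htriv _].
have := (trivIsetP Htriv) p.1 q.1 (imset_f _ pS) (imset_f _ qS).
rewrite (introN eqP n1) => /(_ isT) /disjoint_setI0 /setP /(_ x).
by rewrite inE xp xq inE.
Qed.

Lemma nonempty S p : is_polestar S -> p \in S -> exists x, x \in p.1.
Proof. by move=> [Hs _] /Hs [/set0Pn [x Hx] _]; exists x. Qed.

Lemma disj0 (A B K : {set X}) : [disjoint A & B] -> K \subset A -> K \subset B -> K = set0.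
Proof.
move=> /disjoint_setI0 HI KA KB; apply/eqP; rewrite -subset0 -HI.
by rewrite subsetI KA KB.
Qed.

Lemma Lm S1 S2 p p2 : is_polestar S2 ->
  (forall p1, p1 \in S1 -> exists2 q, q \in S2 & sp_le p1 q) ->
  p \in S1 -> p2 \in S2 -> p2.1 \subset p.1 -> p.1 \subset p2.1.
Proof.
move=> P2 Hsp pS p2S sub.
have [x xp2] := @nonempty S2 p2 P2 p2S.
have xp : x \in p.1 by apply: (subsetP sub).
have [q qS Hle] := Hsp _ pS.
case: Hle => [Epq|[H|[H|[H _]]]].
- subst q. by rewrite (@blk S2 _ _ _ P2 qS p2S xp xp2).
- move: H; rewrite subUset => /andP [H _].
  have xq : x \in q.1 by apply: (subsetP H).
  by rewrite -(@blk S2 _ _ _ P2 qS p2S xq xp2).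
- move: H; rewrite subUset => /andP [H _].
  have xq : x \in q.2 by apply: (subsetP H).
  have qn : q.2 != set0 by apply/set0Pn; exists x.
  have [rS _] := (proj2 (proj2 (proj2 P2))) _ qS qn.
  by rewrite -(@blk S2 _ _ _ P2 rS p2S xq xp2).
- have H' := proper_sub H.
  have xq : x \in q.1 by apply: (subsetP H').
  by rewrite -(@blk S2 _ _ _ P2 qS p2S xq xp2).
Qed.

End H.
Arguments blk {X S p q x}.
Arguments nonempty {X S p}.
Arguments Lm {X S1 S2 p p2}.
Arguments disj0 {X A B K}.

Theorem mainTheorem6 (X : finType) (S1 S2 : {set spair X}) :
  [set: X] != set0 ->
  is_polestar S1 -> is_polestar S2 -> sps_le S1 S2 ->
  forall p1 p2, p1 \in S1 -> p2 \in S2 -> sp_lt p2 p1 ->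
    p2 \in S1 /\ p2.2 = set0 /\ p1.2 = p2.1.
Proof.
move=> _ P1 P2 [Hsp _] p1 p2 p1S p2S [Hle Hne].
have [x xp2] := nonempty P2 p2S.
have [_ Hd2] := (proj1 P2) _ p2S.
have [_ Hd1] := (proj1 P1) _ p1S.
case: Hle => [E|[H|[H|[H [E Hn]]]]].
- by case: Hne.
- exfalso; move: H; rewrite subUset => /andP [HB HK].
  have HA := Lm P2 Hsp p1S p2S HB.
  have EA : p1.1 = p2.1 by apply/eqP; rewrite eqEsubset HA HB.
  have K0 : p2.2 = set0.
    by apply: (disj0 Hd2) => //; rewrite -EA.
  have xp1 : x \in p1.1 by rewrite EA.
  suff H0 : p1.2 = set0.
    by apply: Hne; rewrite (surjective_pairing p1) (surjective_pairing p2) EA H0 K0.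
  have [q qS Hq] := Hsp _ p1S.
  case: Hq => [Epq|[H|[H|[H _]]]].
  + subst q; by case: Hne; rewrite (blk P2 qS p2S xp1 xp2).
  + move: H; rewrite subUset => /andP [H1 H2].
    have xq : x \in q.1 by apply: (subsetP H1).
    have Eq := blk P2 qS p2S xq xp2; subst q.
    by apply: (disj0 Hd1) => //; rewrite EA.
  + move: H; rewrite subUset => /andP [H1 H2].
    have xq : x \in q.2 by apply: (subsetP H1).
    have qn : q.2 != set0 by apply/set0Pn; exists x.
    have [rS _] := (proj2 (proj2 (proj2 P2))) _ qS qn.
    have Er := blk P2 rS p2S xq xp2.
    apply: (disj0 Hd1) => //; rewrite EA -Er //.
  + have xq : x \in q.1 by apply: (subsetP (proper_sub H)).
    have Eq := blk P2 qS p2S xq xp2; subst q.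
    by move: H; rewrite EA properE subxx andbF.
- move: H; rewrite subUset => /andP [HB HK].
  have xH : x \in p1.2 by apply: (subsetP HB).
  have Hn : p1.2 != set0 by apply/set0Pn; exists x.
  have [rS _] := (proj2 (proj2 (proj2 P1))) _ p1S Hn.
  have HA := Lm P2 Hsp rS p2S HB.
  have EA : p1.2 = p2.1 by apply/eqP; rewrite eqEsubset HA HB.
  have K0 : p2.2 = set0.
    by apply: (disj0 Hd2) => //; rewrite -EA.
  split; last by [].
  move: rS; rewrite EA -K0; by case: p2 {Hne K0 EA HA HB HK xp2 Hd2 p2S}.
- exfalso.
  have HA := Lm P2 Hsp p1S p2S (proper_sub H).
  by move: H; rewrite properE HA andbF.
Qed.
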